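(* Let $n\ge2$, $c\in(0,\infty)$, and let $\Sigma_n\in\mathbb{R}^{n\times n}$ have entries $(\Sigma_n)_{ij}=\frac{\pi}{i+j}+\frac{4c\pi^2}{(i+1)(j+1)}$ if $c\in(0,1]$ and $(\Sigma_n)_{ij}=\frac{\pi}{c(i+j)}+\frac{4\pi^2}{(i+1)(j+1)}$ if $c\in(1,\infty)$. Then $\Sigma_n=GG^t$ with $G=(g_{ij})$ lower triangular ($g_{ij}=0$ for $j>i$) where, for $c\in(0,1]$, $$g_{i1}=\frac{2}{i+1}\sqrt{\frac{\pi(1+2c\pi)}{2}}\ (i\ge1),\qquad g_{ij}=\frac{\prod_{k=1}^{j-1}(i-k)\prod_{k=1}^{j}(j+k)}{\prod_{k=1}^{j-1}(j-k)\prod_{k=1}^{j}(i+k)}\sqrt{\frac{\pi\prod_{k=1}^{j-1}(j-k)^2}{2j\prod_{k=1}^{j-1}(j+k)^2}}\ (1<j\le i),$$ and for $c\in(1,\infty)$ the same formulas hold with the radicands replaced by $\frac{\pi(1+2c\pi)}{2c}$ and $\frac{\pi\prod_{k=1}^{j-1}(j-k)^2}{2cj\prod_{k=1}^{j-1}(j+k)^2}$, respectively.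
   Context: $\Sigma_n$ is the asymptotic covariance matrix, in the critical regime $t\delta_t^d\to c$, of the vector $(\tilde L_t^{(0)},\dots,\tilde L_t^{(n-1)})$ of normalized length power functionals in dimension $d=2$ for a window of volume $1$. *)

(* Defs.v *)
From mathcomp Require Import all_boot all_order all_algebra.
From mathcomp Require Import all_classical all_reals all_analysis.
Set Implicit Arguments. Unset Strict Implicit. Unset Printing Implicit Defensive.
Import Order.TTheory GRing.Theory Num.Theory.
Local Open Scope ring_scope.

(* Indices: the matrix entry (i, j) with i j : 'I_n corresponds to the
   paper's 1-based entry (i+1, j+1). *)

Definition Sigma {R : realType} (n : nat) (c : R) : 'M[R]_n :=
  \matrix_(i < n, j < n)
    let a := (i.+1)%:R : R in let b := (j.+1)%:R : R in
    if c <= 1 then pi / (a + b) + 4 * c * pi ^+ 2 / ((a + 1) * (b + 1))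
    else pi / (c * (a + b)) + 4 * pi ^+ 2 / ((a + 1) * (b + 1)).

Definition Gentry {R : realType} (c : R) (i j : nat) : R :=
  (* i, j are the paper's 1-based indices *)
  if (i < j)%N then 0
  else if j == 1%N then
    2 / (i.+1)%:R *
      Num.sqrt (if c <= 1 then pi * (1 + 2 * c * pi) / 2
                else pi * (1 + 2 * c * pi) / (2 * c))
  else
    (\prod_(1 <= k < j) ((i - k)%:R : R) * \prod_(1 <= k < j.+1) ((j + k)%:R : R))
    / (\prod_(1 <= k < j) ((j - k)%:R : R) * \prod_(1 <= k < j.+1) ((i + k)%:R : R))
    * Num.sqrt
        (if c <= 1 then
           pi * \prod_(1 <= k < j) ((j - k)%:R ^+ 2 : R)
           / (2 * j%:R * \prod_(1 <= k < j) ((j + k)%:R ^+ 2 : R))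
         else
           pi * \prod_(1 <= k < j) ((j - k)%:R ^+ 2 : R)
           / (2 * c * j%:R * \prod_(1 <= k < j) ((j + k)%:R ^+ 2 : R))).

Definition Gmat {R : realType} (n : nat) (c : R) : 'M[R]_n :=
  \matrix_(i < n, j < n) Gentry c i.+1 j.+1.

(* Main.v *)
Require Import Defs.
From mathcomp Require Import all_boot all_order all_algebra.
From mathcomp Require Import all_classical all_reals all_analysis.
From mathcomp Require Import ring lra.
Import Order.TTheory GRing.Theory Num.Theory.
Local Open Scope ring_scope.


Definition PP {R : realType} (k : nat) (x : R) : R :=
  (\prod_(1 <= m < k) (x - m%:R)) / (\prod_(1 <= m < k.+1) (x + m%:R)).

Definition RR {R : realType} (N : nat) (x y : R) : R :=
  (\prod_(1 <= m < N.+1) (x - m%:R) * \prod_(1 <= m < N.+1) (y - m%:R)) /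
  ((x + y) * \prod_(1 <= m < N.+1) (x + m%:R) * \prod_(1 <= m < N.+1) (y + m%:R)).

Lemma prod_pos_neq0 {R : realType} (x : R) N : 0 < x -> \prod_(1 <= m < N) (x + m%:R) != 0.
Proof.
move=> hx; rewrite prodf_seq_neq0; apply/allP => m _ /=.
by rewrite gt_eqF // ltr_wpDr.
Qed.

Lemma RR_step {R : realType} N (x y : R) : 0 < x -> 0 < y ->
  RR N x y = RR N.+1 x y + 2 * (N.+1)%:R * PP N.+1 x * PP N.+1 y.
Proof.
move=> hx hy.
rewrite /RR /PP !(big_nat_recr N.+1) //.
have h1 := prod_pos_neq0 x N.+1 hx.
have h2 := prod_pos_neq0 y N.+1 hy.
have h3 : x + y != 0 by rewrite gt_eqF // addr_gt0.
have h4 : x + N.+1%:R != 0 by rewrite gt_eqF // ltr_wpDr.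
have h5 : y + N.+1%:R != 0 by rewrite gt_eqF // ltr_wpDr.
set a := \prod_(1 <= m < N.+1) (x - m%:R).
set b := \prod_(1 <= m < N.+1) (y - m%:R).
move: h1 h2; set c := \prod_(1 <= m < N.+1) (x + m%:R).
set d := \prod_(1 <= m < N.+1) (y + m%:R) => h1 h2 /=.

field.
have hN := ler0n R N.
have h6 : x + (1 + N%:R) != 0 by rewrite gt_eqF //; lra.
have h7 : y + (1 + N%:R) != 0 by rewrite gt_eqF //; lra.
by rewrite ?h1 ?h2 ?h3 ?h6 ?h7.
Qed.
Lemma dummy {R : realType} : True. by [].
Qed.

Lemma RR_sum {R : realType} N (x y : R) : 0 < x -> 0 < y ->
  \sum_(k < N) 2 * (k.+1)%:R * PP k.+1 x * PP k.+1 y = 1 / (x + y) - RR N x y.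
Proof.
move=> hx hy; elim: N => [|N IH].
  rewrite big_ord0 /RR !big_geq // !mulr1 mul1r subrr //.
rewrite big_ord_recr /= IH (@RR_step R N x y hx hy).
by rewrite opprD addrA subrK.
Qed.

Lemma RR_zero {R : realType} N (i : nat) (y : R) : (0 < i <= N)%N -> RR N i%:R y = 0.
Proof.
case/andP=> hi hN.
rewrite /RR (@big_cat_nat _ _ _ i 1 N.+1) //; last by apply: leqW.
rewrite (big_ltn _ (n:=N.+1)) ?ltnS // subrr.
by rewrite /= mul0r mulr0 !mul0r.
Qed.

Lemma PP_zero {R : realType} K (i : nat) : (0 < i < K)%N -> PP K (i%:R : R) = 0.
Proof.
case/andP=> hi hK.
rewrite /PP (@big_cat_nat _ _ _ i 1 K) ?(ltnW hK) //.
by rewrite (big_ltn _ (n:=K)) // subrr /= mul0r mulr0 mul0r.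
Qed.


Definition sc {R : realType} (c : R) : R := if c <= 1 then 1 else c.

Lemma sc_gt0 {R : realType} (c : R) : 0 < c -> 0 < sc c.
Proof. by rewrite /sc; case: ifP. Qed.

Lemma prodB_neq0 {R : realType} K : \prod_(1 <= m < K) ((K - m)%:R : R) != 0.
Proof.
rewrite prodf_seq_neq0; apply/allP => m; rewrite mem_index_iota => /andP[_ hm] /=.
by rewrite pnatr_eq0 subn_eq0 -ltnNge.
Qed.

Lemma prodD_neq0 {R : realType} K : \prod_(1 <= m < K) ((K + m)%:R : R) != 0.
Proof.
rewrite prodf_seq_neq0; apply/allP => m; rewrite mem_index_iota => /andP[hm _] /=.
by rewrite pnatr_eq0 addn_eq0 negb_and; apply/orP; right; rewrite -lt0n.
Qed.

Lemma G1 {R : realType} (c : R) I J : 0 < c -> (0 < I)%N -> (0 < J)%N ->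
  Gentry c I 1 * Gentry c J 1 =
  pi / sc c * (2 * 1%:R * PP 1 I%:R * PP 1 J%:R) +
  4 * c * pi ^+ 2 / (sc c * (I.+1)%:R * (J.+1)%:R).
Proof.
move=> hc hI hJ.
rewrite /Gentry.
rewrite (leq_gtF hI) (leq_gtF hJ) /= mulrACA -expr2 sqr_sqrtr; last first.
  have := pi_gt0 R => hp.
  by case: ifP => _; apply: divr_ge0; nra.
rewrite /PP !big_nat1 !big_geq // -!natr1 /sc.
have := ler0n R I; have := ler0n R J => h1 h2.
have h3 : I%:R + 1 != 0 :> R by rewrite gt_eqF //; lra.
have h4 : J%:R + 1 != 0 :> R by rewrite gt_eqF //; lra.
have h5 : c != 0 by rewrite gt_eqF.
case: ifP => _; field; by rewrite ?h3 ?h4 ?h5.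
Qed.

Definition rad {R : realType} (c : R) (K : nat) : R :=
  if c <= 1 then
    pi * \prod_(1 <= k < K) ((K - k)%:R ^+ 2 : R)
     / (2 * K%:R * \prod_(1 <= k < K) ((K + k)%:R ^+ 2 : R))
  else
    pi * \prod_(1 <= k < K) ((K - k)%:R ^+ 2 : R)
     / (2 * c * K%:R * \prod_(1 <= k < K) ((K + k)%:R ^+ 2 : R)).

Definition QQ {R : realType} (K : nat) : R :=
  \prod_(1 <= m < K.+1) ((K + m)%:R : R) / \prod_(1 <= m < K) ((K - m)%:R : R).

Lemma GentryE {R : realType} (c : R) I K : (2 <= K)%N -> (K <= I)%N ->
  Gentry c I K = QQ K * PP K I%:R * Num.sqrt (rad c K).
Proof.
move=> hK hKI.
rewrite /Gentry ltnNge hKI /=.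
have -> : (K == 1)%N = false by case: K hK {hKI} => [|[]].
rewrite /QQ /PP /rad.
rewrite (@eq_big_nat _ _ _ 1 K (fun k => (I - k)%:R) (fun k => I%:R - k%:R)); last first.
  move=> k /andP[_ hk]; rewrite natrB //; exact: (leq_trans (ltnW hk) hKI).
rewrite (@eq_big_nat _ _ _ 1 K.+1 (fun k => (I + k)%:R) (fun k => I%:R + k%:R)); last first.
  by move=> k _; rewrite natrD.
rewrite !invfM.
set S := Num.sqrt _.
set a := \prod_(1 <= i < K) (I%:R - i%:R).
set b := \prod_(1 <= i < K.+1) ((K + i)%:R : R).
set d := \prod_(1 <= i < K) ((K - i)%:R : R).
set e := \prod_(1 <= i < K.+1) (I%:R + i%:R : R).
by rewrite -!mulrA mulrCA; congr (_ * _); exact: mulrCA.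
Qed.

Lemma rad_ge0 {R : realType} (c : R) K : 0 < c -> 0 <= rad c K.
Proof.
move=> hc; have hp := pi_gt0 R.
rewrite /rad; case: ifP => _; apply: divr_ge0.
- by apply: mulr_ge0; [lra| apply: prodr_ge0 => i _; apply: sqr_ge0].
- by apply: mulr_ge0; [apply: mulr_ge0; [lra|apply: ler0n] | apply: prodr_ge0 => i _; apply: sqr_ge0].
- by apply: mulr_ge0; [lra| apply: prodr_ge0 => i _; apply: sqr_ge0].
- by apply: mulr_ge0; [apply: mulr_ge0; [nra|apply: ler0n] | apply: prodr_ge0 => i _; apply: sqr_ge0].
Qed.

Lemma QQrad {R : realType} (c : R) K : 0 < c -> (1 <= K)%N -> QQ K ^+ 2 * rad c K = pi / sc c * (2 * K%:R).
Proof.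
move=> hc hK.
rewrite /QQ /rad /sc big_nat_recr //= !prodrXl natrD.
have hA := prodD_neq0 (R:=R) K; have hB := prodB_neq0 (R:=R) K.
have hK0 : K%:R != 0 :> R by rewrite pnatr_eq0 -lt0n.
have hc0 : c != 0 by rewrite gt_eqF.
move: hA hB.
set A := \prod_(1 <= m < K) ((K + m)%:R : R).
set B := \prod_(1 <= m < K) ((K - m)%:R : R) => hA hB.
case: ifP => _; field; by rewrite ?hA ?hB ?hK0 ?hc0.
Qed.

Lemma GK {R : realType} (c : R) I J K : 0 < c -> (0 < I)%N -> (0 < J)%N -> (2 <= K)%N ->
  Gentry c I K * Gentry c J K = pi / sc c * (2 * K%:R * PP K I%:R * PP K J%:R).
Proof.
move=> hc hI hJ hK.
case: (ltnP I K) => hIK.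
  by rewrite [Gentry c I K]/Gentry hIK (@PP_zero R K I) ?hI ?hIK // !(mul0r, mulr0).
case: (ltnP J K) => hJK.
  by rewrite [Gentry c J K]/Gentry hJK (@PP_zero R K J) ?hJ ?hJK // !(mul0r, mulr0).
rewrite !GentryE //.
have e : Num.sqrt (rad c K) * Num.sqrt (rad c K) = rad c K.
  by rewrite -expr2 sqr_sqrtr // rad_ge0.
transitivity (QQ K ^+ 2 * (Num.sqrt (rad c K) * Num.sqrt (rad c K)) * PP K I%:R * PP K J%:R).
  by ring.
rewrite e.
by rewrite QQrad ?(leq_trans _ hK) //; ring.
Qed.

Theorem corollary7p13 (R : realType) (n : nat) (c : R) :
  (2 <= n)%N -> 0 < c ->
  (forall i j : 'I_n, (i < j)%N -> Gmat n c i j = 0) /\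
  Sigma n c = Gmat n c *m (Gmat n c)^T.
Proof.
move=> hn hc; split.
  by move=> i j hij; rewrite mxE /Gentry ltnS hij.
apply/matrixP => i j; rewrite !mxE /=.
under eq_bigr => k _ do rewrite !mxE.
case: n hn i j => [|[|n']] // _ i j.
rewrite big_ord_recl /= G1 //.
under eq_bigr => k _ do rewrite /bump leq0n add1n GK //.
rewrite -big_distrr /=.
have ha : 0 < (i.+1)%:R :> R by rewrite ltr0Sn.
have hb : 0 < (j.+1)%:R :> R by rewrite ltr0Sn.
have hs := @RR_sum R (n'.+2) _ _ ha hb.
rewrite big_ord_recl /= RR_zero in hs; last exact: ltn_ord.
move: hs.
set S := \sum_(i0 < n'.+1) (2 * (i0.+2)%:R * _ * _).
move=> hs.
have {}hs : S = 1 / ((i.+1)%:R + (j.+1)%:R) - 0 - 2 * 1 * PP 1 (i.+1)%:R * PP 1 (j.+1)%:R.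
  by rewrite -hs addrC addKr.
rewrite hs subr0 /sc -!natr1.
have h1 := ler0n R i; have h2 := ler0n R j.
have h3 : i%:R + 1 + (j%:R + 1) != 0 :> R by rewrite gt_eqF //; lra.
have h4 : i%:R + 1 + 1 != 0 :> R by rewrite gt_eqF //; lra.
have h5 : j%:R + 1 + 1 != 0 :> R by rewrite gt_eqF //; lra.
have h6 : c != 0 by rewrite gt_eqF.
case: ifP => _; field; by rewrite ?h3 ?h4 ?h5 ?h6.
Qed.
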